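(* Let $S$ be a smooth projective surface with $b_1(S)=0$, $p_g(S)>0$, let $\pi:\widetilde S\to S$ be the blow-up at one point with exceptional divisor $E$, let $c_1\in H^2(S,\mathbb{Z})$, $\ell\in\{0,1,2\}$, and $\widetilde c_1=\pi^*c_1-\ell E$. Let $\mathrm{SW}$ be the Seiberg–Witten invariants of $S$ and define those of $\widetilde S$ by $\widetilde{\mathrm{SW}}(\pi^*a)=\widetilde{\mathrm{SW}}(\pi^*a+E)=\mathrm{SW}(a)$ for $a\in H^2(S,\mathbb{Z})$, and $\widetilde{\mathrm{SW}}=0$ on all other classes. With $\mathsf{Z}^{\mathrm{inst}}$ defined as in the context (using $\widetilde{\mathrm{SW}}$, $K_{\widetilde S}=\pi^*K_S+E$, $\chi(\mathcal{O}_{\widetilde S})=\chi(\mathcal{O}_S)$ for $\widetilde S$), one has $$\mathsf{Z}^{\mathrm{inst}}_{\widetilde S,\widetilde c_1}(x,y)=\begin{cases}\dfrac{\Theta_{A_2,(0,0)}(x^3,y)}{\overline\eta(x^6)^3}\,\mathsf{Z}^{\mathrm{inst}}_{S,c_1}(x,y),&\ell=0,\\[2ex]\dfrac{\Theta_{A_2,(1,0)}(x^3,y)}{\overline\eta(x^6)^3}\,\mathsf{Z}^{\mathrm{inst}}_{S,c_1}(x,y),&\ell=1,2.\end{cases}$$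
   Context: $\epsilon=e^{2\pi i/3}$. For a surface $X$ with invariants $\chi=\chi(\mathcal{O}_X)$, canonical class $K$, Seiberg–Witten function $\mathrm{SW}$ (finitely supported on $H^2(X,\mathbb{Z})$), and $c\in H^2(X,\mathbb{Z})$, define $\psi_{X,c}(x,y):=9\Big(\frac{1}{3\prod_{n\ge1}(1-x^{2n})^{10}(1-x^{2n}y)(1-x^{2n}y^{-1})}\Big)^{\chi}\Big(\frac{\Theta_{A_2^\vee,(0,1)}(x,y)}{3\overline{\eta}(x^6)^3}\Big)^{-K^2}\sum_{a,b\in H^2(X,\mathbb{Z})}\mathrm{SW}(a)\mathrm{SW}(b)\epsilon^{(a-b)c}Z_+(x,y)^{ab}Z_-(x,y)^{(K-a)(K-b)}$, and writing $\psi_{X,c}=\sum_n\psi_n(y)x^n$, set $\mathsf{Z}^{\mathrm{inst}}_{X,c}(x,y):=\sum_{n\equiv-2c^2-8\chi\ (\mathrm{mod}\ 3)}\psi_n(y)x^n=\frac13\sum_{k=0}^2\epsilon^{k(2c^2+8\chi)}\psi_{X,c}(\epsilon^kx,y)$. Here $\overline\eta(x)=\prod_{n\ge1}(1-x^n)$; $\Theta_{A_2,(0,0)}(x,y)=\sum_{(m,n)\in\mathbb{Z}^2}x^{2(m^2-mn+n^2)}y^{m+n}$, $\Theta_{A_2,(1,0)}(x,y)=\sum_{(m,n)}x^{2(m^2-mn+n^2+m-n+\frac13)}y^{m+n}$, $\Theta_{A_2^\vee,(0,0)}(x,y)=\sum_{(m,n)}x^{2(m^2+mn+n^2)}y^{m+n}$,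 $\Theta_{A_2^\vee,(0,1)}(x,y)=\sum_{(m,n)}\epsilon^{m-n}x^{2(m^2+mn+n^2)}y^{m+n}$; $Z=\Theta_{A_2^\vee,(0,0)}/\Theta_{A_2^\vee,(0,1)}$ and $Z_\pm(x,y)$ are the two roots in $\zeta$ of $\zeta^2-(Z(x,y)^2+3Z(x,y)Z(x,1))\zeta+Z(x,y)+3Z(x,1)=0$. (Under the paper's Conjecture 1, $\mathsf{Z}^{\mathrm{inst}}_{X,c}(x,y)=\sum_{c_2}\overline\chi^{\mathrm{vir}}_{-y}(M_X^H(3,c,c_2))x^{\mathrm{vd}}$.) *)

(* Defs.v *)
From HB Require Import structures.
From mathcomp Require Import all_boot all_order all_algebra.
From mathcomp Require Import algC.
Set Implicit Arguments. Unset Strict Implicit. Unset Printing Implicit Defensive.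
Import Order.TTheory GRing.Theory Num.Theory.
Local Open Scope ring_scope.

(* Coefficient field: C = algC(w), with w = y^(1/2) a formal variable.      *)
(* The variable y of the paper is y := w^2.  (Half-integer powers of y and  *)
(* sqrt(3) occur in the coefficients of Z_+ and Z_-.)         *)
Definition C : fieldType := {fraction {poly algC}}.
Definition tofracC (p : {poly algC}) : C := @FracField.tofrac _ p.
Definition cst (z : algC) : C := tofracC z%:P.
Definition yw : C := tofracC 'X.
Definition yvar : C := yw ^+ 2.

(* epsilon = exp(2 pi i / 3) = (-1 + i sqrt 3)/2 *)
Definition eps : algC := (-1 + 'i * sqrtC 3) / 2%:R.
Definition epsC : C := cst eps.

(* Formal power series in x over C, as coefficient functions.               *)
Definition series := nat -> C.

Definition sconst (c : C) : series := fun n => if n == 0%N then c else 0.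
Definition sone : series := sconst 1.
Definition sadd (f g : series) : series := fun n => f n + g n.
Definition sscale (c : C) (f : series) : series := fun n => c * f n.
Definition smul (f g : series) : series :=
  fun n => \sum_(i < n.+1) f i * g (n - i)%N.

(* multiplicative inverse (meaningful when f 0 != 0) *)
Fixpoint sinv_seq (f : series) (n : nat) : seq C :=
  match n with
  | 0 => [:: (f 0%N)^-1]
  | n'.+1 => let s := sinv_seq f n' in
      rcons s (- (f 0%N)^-1 * \sum_(i < n) f i.+1 * nth 0 s (n' - i)%N)
  end.
Definition sinv (f : series) : series := fun n => nth 0 (sinv_seq f n) n.

Definition spow (f : series) (n : nat) : series := iter n (smul f) sone.
Definition spowz (f : series) (z : int) : series :=
  match z with
  | Posz n => spow f n
  | Negz n => spow (sinv f) n.+1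
  end.

(* the series 1 - c x^d  (d >= 1) *)
Definition sbinom (c : C) (d : nat) : series :=
  fun n => if n == 0%N then 1 else if n == d then - c else 0.

(* infinite product prod_{n >= 1} F n, where F n = 1 + O(x^n):
   the coefficient of x^k only depends on the factors n <= k. *)
Fixpoint sprod_upto (F : nat -> series) (k : nat) : series :=
  match k with
  | 0 => sone
  | k'.+1 => smul (sprod_upto F k') (F k)
  end.
Definition sinfprod (F : nat -> series) : series := fun k => sprod_upto F k k.

Definition sproj3 (r : int) (f : series) : series :=
  fun n => if ((n%:Z - r) %% 3 == 0)%Z then f n else 0.

(* Theta functions.  A lattice sum over (m,n) in Z^2 whose x-exponent is    *)
(* e(m,n) >= 0: the coefficient of x^k collects the (m,n) with e(m,n) = k.  *)
(* For all lattice sums below, e(m,n) = k forces |m|,|n| <= k+1.            *)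
Definition lattice_sum (e : int -> int -> int) (w : int -> int -> C) : series :=
  fun k => \sum_(i < (2 * k + 3)%N) \sum_(j < (2 * k + 3)%N)
     let m := (i%:Z - (k.+1)%:Z)%R in let n := (j%:Z - (k.+1)%:Z)%R in
     if e m n == k%:Z then w m n else 0.

(* Theta_{A2,(0,0)}(x,y), Theta_{A2,(1,0)}(x,y) are only needed at x^3: *)
Definition ThetaA2_00_x3 : series :=
  lattice_sum (fun m n => 6 * (m * m - m * n + n * n)) (fun m n => yvar ^ (m + n)).
(* Theta_{A2,(1,0)}(x^3,y) = sum x^{6(m^2-mn+n^2+m-n+1/3)} y^{m+n} *)
Definition ThetaA2_10_x3 : series :=
  lattice_sum (fun m n => 6 * (m * m - m * n + n * n + m - n) + 2)
              (fun m n => yvar ^ (m + n)).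
Definition ThetaA2v_00 (yv : C) : series :=
  lattice_sum (fun m n => 2 * (m * m + m * n + n * n)) (fun m n => yv ^ (m + n)).
Definition ThetaA2v_01 (yv : C) : series :=
  lattice_sum (fun m n => 2 * (m * m + m * n + n * n))
              (fun m n => epsC ^ (m - n) * yv ^ (m + n)).

Definition etabar_x6 : series := sinfprod (fun n => sbinom 1 (6 * n)).

Definition Zser (yv : C) : series := smul (ThetaA2v_00 yv) (sinv (ThetaA2v_01 yv)).
(* Z_+ and Z_- are the roots of zeta^2 - Ztr zeta + Znm *)
Definition Ztr : series :=
  sadd (smul (Zser yvar) (Zser yvar)) (sscale 3%:R (smul (Zser yvar) (Zser 1))).
Definition Znm : series := sadd (Zser yvar) (sscale 3%:R (Zser 1)).
Definition are_Zpm (zp zm : series) : Prop :=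
  (forall n, sadd zp zm n = Ztr n) /\ (forall n, smul zp zm n = Znm n).

Definition Gser : series :=
  sinv (sscale 3%:R (sinfprod (fun n =>
     smul (spow (sbinom 1 (2 * n)) 10)
          (smul (sbinom yvar (2 * n)) (sbinom yvar^-1 (2 * n)))))).

Definition Hser : series :=
  smul (ThetaA2v_01 yvar) (sinv (sscale 3%:R (spow etabar_x6 3))).

(* Surface data.  H^2(X,Z) is an abelian group V with the (integer valued,  *)
(* symmetric, biadditive) intersection pairing dot.  SW is finitely         *)
(* supported; B is a duplicate-free list containing its support.            *)
Definition is_pairing (V : zmodType) (dot : V -> V -> int) : Prop :=
  (forall a b, dot a b = dot b a) /\ (forall a b c, dot (a + b) c = dot a c + dot b c).

Definition psi (V : eqType) (dot : V -> V -> int) (chi : int) (K : V)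
   (SW : V -> int) (B : seq V) (sub : V -> V -> V) (c : V) (zp zm : series) : series :=
  sscale 9%:R (smul (spowz Gser chi) (smul (spowz Hser (- dot K K))
    (fun n => \sum_(a <- B) \sum_(b <- B)
        smul (sscale (((SW a * SW b)%:~R : C) * epsC ^ (dot (sub a b) c))
                     (spowz zp (dot a b)))
             (spowz zm (dot (sub K a) (sub K b))) n))).

Definition Zinst (V : zmodType) (dot : V -> V -> int) (chi : int) (K : V)
   (SW : V -> int) (B : seq V) (c : V) (zp zm : series) : series :=
  sproj3 (- 2 * dot c c - 8 * chi) (psi dot chi K SW B (fun a b => a - b) c zp zm).

(* Blow-up at one point: H^2(S~) = H^2(S) (+) Z E, pi^* a = (a,0), E=(0,1),  *)
(* (a,s).(b,t) = a.b - s t.                                                *)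
Definition bl_dot (V : zmodType) (dot : V -> V -> int) (u v : V * int) : int :=
  dot u.1 v.1 - u.2 * v.2.
Definition bl_pull (V : zmodType) (a : V) : V * int := (a, 0).
Definition bl_E (V : zmodType) : V * int := (0, 1).
Definition bl_SW (V : zmodType) (SW : V -> int) (u : V * int) : int :=
  if (u.2 == 0) || (u.2 == 1) then SW u.1 else 0.
Definition bl_B (V : zmodType) (B : seq V) : seq (V * int) :=
  [seq bl_pull a | a <- B] ++ [seq bl_pull a + bl_E V | a <- B].

(* Main.v *)
Require Import Defs.
From HB Require Import structures.
From mathcomp Require Import all_boot all_order all_algebra.
From mathcomp Require Import algC.
From mathcomp Require Import boolp.
From mathcomp Require Import zify ring lra.
Import Order.TTheory GRing.Theory Num.Theory.
Local Open Scope ring_scope.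

Definition ser := series.
HB.instance Definition _ := Choice.on ser.

Definition szero : ser := fun _ => 0.
Definition sopp (f : ser) : ser := fun n => - f n.

Lemma saddA : associative (sadd : ser -> ser -> ser).
Proof. by move=> f g h; apply/funext=> n; rewrite /sadd addrA. Qed.
Lemma saddC : commutative (sadd : ser -> ser -> ser).
Proof. by move=> f g; apply/funext=> n; rewrite /sadd addrC. Qed.
Lemma sadd0 : left_id szero (sadd : ser -> ser -> ser).
Proof. by move=> f; apply/funext=> n; rewrite /sadd /szero add0r. Qed.
Lemma saddN : left_inverse szero sopp (sadd : ser -> ser -> ser).
Proof. by move=> f; apply/funext=> n; rewrite /sadd /szero /sopp addNr. Qed.

HB.instance Definition _ := GRing.isZmodule.Build ser saddA saddC sadd0 saddN.

Lemma serD (f g : ser) n : (f + g) n = f n + g n. Proof. by []. Qed.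
Lemma serN (f : ser) n : (- f) n = - f n. Proof. by []. Qed.
Lemma ser0 n : (0 : ser) n = 0. Proof. by []. Qed.
Lemma serB (f g : ser) n : (f - g) n = f n - g n. Proof. by []. Qed.
Lemma ser_sum (I : Type) (r : seq I) (P : pred I) (F : I -> ser) n :
  (\sum_(i <- r | P i) F i) n = \sum_(i <- r | P i) F i n.
Proof. by elim/big_rec2: _ => // i y1 y2 _ <-. Qed.

Definition tp (f : ser) (n : nat) : {poly C} := \poly_(i < n.+1) f i.

Lemma coefM_local (p p2 q q2 : {poly C}) n :
  (forall i, (i <= n)%N -> p`_i = p2`_i) -> (forall i, (i <= n)%N -> q`_i = q2`_i) ->
  (p * q)`_n = (p2 * q2)`_n.
Proof.
move=> Hp Hq; rewrite !coefM; apply: eq_bigr => i _.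
by rewrite Hp ?Hq ?leq_subr // -ltnS.
Qed.

Lemma smul_tp (f g : ser) n : smul f g n = (tp f n * tp g n)`_n.
Proof.
rewrite coefM /smul; apply: eq_bigr => i _.
by rewrite !coef_poly ltn_ord ltnS leq_subr.
Qed.

Lemma tp_agree (f : ser) m n i : (i <= m)%N -> (i <= n)%N -> (tp f m)`_i = (tp f n)`_i.
Proof. by move=> Hm Hn; rewrite !coef_poly !ltnS Hm Hn. Qed.

Lemma tp_smul (f g : ser) n i : (i <= n)%N -> (tp (smul f g) n)`_i = (tp f n * tp g n)`_i.
Proof.
move=> Hi; rewrite coef_poly ltnS Hi smul_tp.
by apply: coefM_local => j Hj; apply: tp_agree => //; apply: leq_trans Hj Hi.
Qed.

Lemma smulA : associative (smul : ser -> ser -> ser).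
Proof.
move=> f g h; apply/funext=> n.
have E1 : smul f (smul g h) n = (tp f n * (tp g n * tp h n))`_n.
  rewrite smul_tp; apply: coefM_local => // i Hi; exact: tp_smul.
have E2 : smul (smul f g) h n = ((tp f n * tp g n) * tp h n)`_n.
  rewrite smul_tp; apply: coefM_local => // i Hi; exact: tp_smul.
by rewrite E1 E2 mulrA.
Qed.

Lemma smulC : commutative (smul : ser -> ser -> ser).
Proof. by move=> f g; apply/funext=> n; rewrite !smul_tp mulrC. Qed.

Lemma smul1 : left_id (sone : ser) smul.
Proof.
move=> f; apply/funext=> n; rewrite /smul big_ord_recl /= /sone /sconst /= mul1r subn0.
by rewrite big1 ?addr0 // => i _; rewrite mul0r.
Qed.

Lemma smulDl : left_distributive (smul : ser -> ser -> ser) sadd.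
Proof.
move=> f g h; apply/funext=> n; rewrite /smul /sadd -big_split /=.
by apply: eq_bigr => i _; rewrite mulrDl.
Qed.

Lemma sone_neq0 : (sone : ser) != 0.
Proof.
apply/eqP => /(congr1 (fun f : ser => f 0%N)); rewrite /sone /sconst /=.
by move/eqP; rewrite oner_eq0.
Qed.

HB.instance Definition _ := GRing.Zmodule_isComNzRing.Build ser smulA smulC smul1 smulDl sone_neq0.

Lemma serM (f g : ser) n : (f * g) n = smul f g n. Proof. by []. Qed.
Lemma ser1 n : (1 : ser) n = if n == 0%N then 1 else 0. Proof. by []. Qed.

Lemma size_sinv_seq (f : series) n : size (sinv_seq f n) = n.+1.
Proof. by elim: n => //= n IH; rewrite size_rcons IH. Qed.

Lemma nth_sinv_seq (f : series) n m : (m <= n)%N -> nth 0 (sinv_seq f n) m = sinv f m.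
Proof.
elim: n => [|n IH]; first by rewrite leqn0 => /eqP ->.
rewrite leq_eqVlt => /orP [/eqP -> //| Hm].
by rewrite /= nth_rcons size_sinv_seq Hm IH.
Qed.

Lemma sinvS (f : series) n :
  sinv f n.+1 = - (f 0%N)^-1 * \sum_(i < n.+1) f i.+1 * sinv f (n - i)%N.
Proof.
rewrite {1}/sinv /= nth_rcons size_sinv_seq ltnn eqxx; congr (_ * _).
by apply: eq_bigr => i _; rewrite nth_sinv_seq // leq_subr.
Qed.

Lemma sinv0 (f : series) : sinv f 0%N = (f 0%N)^-1.
Proof. by []. Qed.

Lemma smul_sinv (f : series) : f 0%N != 0 -> smul f (sinv f) = sone.
Proof.
move=> H0; apply/funext => -[|n].
  by rewrite /smul big_ord1 /= sinv0 divff.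
rewrite /smul big_ord_recl /= subn0 sinvS /sone /sconst /=.
rewrite mulrA mulrN divff // mulN1r.
have -> : \sum_(i < n.+1) f (bump 0 i) * sinv f (n.+1 - bump 0 i)%N
          = \sum_(i < n.+1) f i.+1 * sinv f (n - i)%N by [].
by rewrite addNr.
Qed.

Definition sunit : pred ser := fun f => f 0%N != 0.
Definition sinvr (f : ser) : ser := if f 0%N != 0 then sinv f else f.

Lemma smulVx : {in sunit, left_inverse 1 sinvr *%R}.
Proof.
move=> f Hf; rewrite /sinvr; have Hf' : f 0%N != 0 by exact: Hf.
by rewrite Hf' mulrC; apply: smul_sinv.
Qed.

Lemma smul0 (f g : series) : smul f g 0%N = f 0%N * g 0%N.
Proof. by rewrite /smul big_ord1. Qed.

Lemma sunitPl : forall x y : ser, y * x = 1 -> sunit x.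
Proof.
move=> x y /(congr1 (fun h : ser => h 0%N)); rewrite serM smul0 ser1 /=.
rewrite /sunit => H; apply/eqP => H0; move: H; rewrite H0 mulr0 => /eqP.
by rewrite eq_sym oner_eq0.
Qed.

Lemma sinvr_out : {in [predC sunit], sinvr =1 id}.
Proof.
move=> f; rewrite inE /= /sinvr /in_mem /= /sunit.
by case: (f 0%N != 0).
Qed.

HB.instance Definition _ := GRing.ComNzRing_hasMulInverse.Build ser smulVx sunitPl sinvr_out.

Lemma unit_serE (f : ser) : (f \is a GRing.unit) = (f 0%N != 0).
Proof. by []. Qed.
Lemma invr_serE (f : ser) : f 0%N != 0 -> f^-1 = sinv f.
Proof. by move=> H; rewrite /GRing.inv /= /sinvr H. Qed.

Definition scst (c : C) : ser := sconst c.

Lemma sscaleE (c : C) (f : ser) : (sscale c f : ser) = scst c * f.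
Proof.
apply/funext=> n; rewrite serM /smul big_ord_recl /scst /sconst /= subn0.
by rewrite big1 ?addr0 // => i _; rewrite mul0r.
Qed.

Lemma sconstM (a b : C) : scst (a * b) = scst a * scst b.
Proof.
rewrite -sscaleE; apply/funext=> n; rewrite /sscale /scst /sconst.
by case: (n == 0%N); rewrite ?mulr0.
Qed.
Lemma sconst1 : scst 1 = 1. Proof. by []. Qed.
Lemma sconstD (a b : C) : scst (a + b) = scst a + scst b.
Proof. by apply/funext=> n; rewrite serD /scst /sconst; case: (n == 0%N); rewrite ?addr0. Qed.
Lemma sconstN (a : C) : scst (- a) = - scst a.
Proof. by apply/funext=> n; rewrite serN /scst /sconst; case: (n == 0%N); rewrite ?oppr0. Qed.
Lemma scst0 : scst 0 = 0.
Proof. by apply/funext=> n; rewrite /scst /sconst; case: (n == 0%N). Qed.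

Lemma sconst_nat k : scst k%:R = k%:R.
Proof. elim: k => [|k IH]; first exact: scst0. by rewrite -addn1 !natrD sconstD IH. Qed.
Lemma sconstX (a : C) k : scst (a ^+ k) = scst a ^+ k.
Proof. by elim: k => // k IH; rewrite !exprS sconstM IH. Qed.

Lemma serM0 (f g : ser) : (f * g) 0%N = f 0%N * g 0%N.
Proof. by rewrite serM smul0. Qed.
Lemma serX0 (f : ser) k : (f ^+ k) 0%N = f 0%N ^+ k.
Proof. by elim: k => // k IH; rewrite !exprS serM0 IH. Qed.
Lemma serV0 (f : ser) : f 0%N != 0 -> (f^-1) 0%N = (f 0%N)^-1.
Proof. by move=> H; rewrite invr_serE. Qed.
Lemma sconst0 (c : C) : scst c 0%N = c. Proof. by []. Qed.

Lemma spowE (f : ser) k : spow f k = f ^+ k.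
Proof. by elim: k => // k IH; rewrite exprS -IH. Qed.

Lemma spowzE (f : ser) z : f 0%N != 0 -> spowz f z = f ^ z.
Proof.
move=> H; case: z => n; first exact: spowE.
rewrite /spowz spowE -invr_serE // NegzE -exprnN exprVn.
by [].


Qed.

Lemma sinvE (f : ser) : f 0%N != 0 -> sinv f = f^-1.
Proof. by move=> H; rewrite invr_serE. Qed.

Definition grd (r : int) (f : ser) := forall n : nat, f n != 0 -> ((n%:Z - r) %% 3 = 0)%Z.

Lemma grdM r s (f g : ser) : grd r f -> grd s g -> grd (r + s) (f * g).
Proof.
move=> Hf Hg n H; apply/eqP; move: H; apply: contraNT => Hn; rewrite serM /smul; apply/eqP.
apply: big1 => i _.
have [Hfi|Hfi] := eqVneq (f i) 0; first by rewrite Hfi mul0r.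
have [Hgi|Hgi] := eqVneq (g (n - i)%N) 0; first by rewrite Hgi mulr0.
exfalso; move: Hn => /negP; apply; apply/eqP.
have := Hf _ Hfi; have := Hg _ Hgi; have Hi : (i <= n)%N by rewrite -ltnS.
rewrite -subzn //; lia.
Qed.

Lemma grd_cst c : grd 0 (scst c).
Proof. by move=> [|n] //; rewrite /scst /sconst /= eqxx. Qed.
Lemma grd1 : grd 0 1.
Proof. by move=> [|n] //; rewrite ser1 /= eqxx. Qed.

Lemma grdX (f : ser) k : grd 0 f -> grd 0 (f ^+ k).
Proof.
move=> Hf; elim: k => [|k IH]; first exact: grd1.
by rewrite exprS -[0]addr0; apply: grdM.
Qed.

Lemma grdV (f : ser) : f 0%N != 0 -> grd 0 f -> grd 0 (f^-1).
Proof.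
move=> H0 Hf; rewrite invr_serE //.
move=> n; elim: n {-2}n (leqnn n) => [|N IH] n Hn.
  by move: Hn; rewrite leqn0 => /eqP ->.
case: n Hn => [|n] Hn; first by [].
rewrite ltnS in Hn.
move=> H; apply/eqP; move: H; apply: contraNT => Hm; rewrite sinvS; apply/eqP.
rewrite [X in _ * X]big1 ?mulr0 // => i _.
have [Hfi|Hfi] := eqVneq (f i.+1) 0; first by rewrite Hfi mul0r.
have [Hgi|Hgi] := eqVneq (sinv f (n - i)%N) 0; first by rewrite Hgi mulr0.
exfalso; move: Hm => /negP; apply; apply/eqP.
have Hi : (i <= n)%N by rewrite -ltnS.
have := Hf _ Hfi; have := IH _ (leq_trans (leq_subr i n) Hn) Hgi.
rewrite -subzn //; lia.
Qed.

Lemma grd_sbinom c d : (d %% 3 = 0)%N -> grd 0 (sbinom c d).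
Proof.
move=> Hd n; rewrite /sbinom; case: (n =P 0%N) => [-> //|_].
case: (n =P d) => [->|_]; last by rewrite eqxx.
move=> _; rewrite subr0; move: Hd => /eqP; rewrite -/(dvdn 3 d) => /dvdnP [k ->].
rewrite PoszM; lia.
Qed.

Lemma grd_prod (F : nat -> series) : (forall n, grd 0 (F n)) -> grd 0 (sinfprod F).
Proof.
move=> HF k; rewrite /sinfprod.
have : grd 0 (sprod_upto F k).
  elim: k => [|k IH] /=; first exact: grd1.
  by have := @grdM 0 0 _ _ IH (HF k.+1); rewrite addr0.
by apply.
Qed.

Lemma proj_grd (r s : int) (F g : ser) : grd s F ->
  sproj3 (r + s) (F * g) = F * sproj3 r g.
Proof.
move=> HF; apply/funext => n; rewrite /sproj3 !serM /smul.
case: ifP => Hn.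
  apply: eq_bigr => i _.
  have [Hfi|Hfi] := eqVneq (F i) 0; first by rewrite Hfi !mul0r.
  have := HF _ Hfi; have Hi : (i <= n)%N by rewrite -ltnS.
  move/eqP: Hn; rewrite -subzn // => Hn Hi2.
  by rewrite ifT //; apply/eqP; lia.
rewrite big1 // => i _.
have [Hfi|Hfi] := eqVneq (F i) 0; first by rewrite Hfi !mul0r.
have := HF _ Hfi; have Hi : (i <= n)%N by rewrite -ltnS.
move/negbT/eqP: Hn; rewrite -subzn // => Hn Hi2.
by rewrite ifF ?mulr0 //; apply/eqP; lia.
Qed.

Definition rng (k : nat) : seq int := [seq (i%:Z - (k.+1)%:Z) | i <- iota 0 (2 * k + 3)].
Definition bx (k : nat) : seq (int * int) := [seq (m, n) | m <- rng k, n <- rng k].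

Lemma sum_ord_iota n (F : nat -> C) : \sum_(i < n) F i = \sum_(i <- iota 0 n) F i.
Proof. by rewrite -(big_mkord (fun _ => true)) /index_iota subn0. Qed.

Lemma lattice_sumE e w k :
  lattice_sum e w k = \sum_(p <- bx k | e p.1 p.2 == k%:Z) w p.1 p.2.
Proof.
pose G := fun m n => if e m n == k%:Z then w m n else 0.
transitivity (\sum_(i <- iota 0 (2*k+3)) \sum_(j <- iota 0 (2*k+3))
   G (i%:Z - (k.+1)%:Z) (j%:Z - (k.+1)%:Z)).
  rewrite /lattice_sum (sum_ord_iota _ (fun i : nat => \sum_(j < 2*k+3) G (i%:Z - (k.+1)%:Z) (j%:Z - (k.+1)%:Z))).
  apply: eq_bigr => i _.
  exact: (sum_ord_iota _ (fun j : nat => G (i%:Z - (k.+1)%:Z) (j%:Z - (k.+1)%:Z))).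
rewrite /bx [RHS]big_mkcond /= big_allpairs /rng big_map.
apply: eq_bigr => i _.
by rewrite big_map.
Qed.

Lemma mem_rng k (x : int) : (- (k.+1)%:Z <= x <= (k.+1)%:Z) -> x \in rng k.
Proof.
move=> /andP [H1 H2]; apply/mapP; exists (absz (x + (k.+1)%:Z)).
  rewrite mem_iota; apply/andP; split; lia.
lia.
Qed.

Lemma mem_bx k (m n : int) : `|m| <= (k.+1)%:Z -> `|n| <= (k.+1)%:Z -> (m, n) \in bx k.
Proof.
move=> Hm Hn; apply: allpairs_f; apply: mem_rng; lia.
Qed.

Lemma uniq_bx k : uniq (bx k).
Proof.
have Hr : uniq (rng k).
  rewrite /rng map_inj_uniq ?iota_uniq // => i j /eqP; rewrite (inj_eq (addIr _)).
  by move/eqP => [].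
apply: allpairs_uniq => // -[a b] [c d] _ _ /= [-> ->] //.
Qed.

Lemma sum_reindex (s : seq (int * int)) (P Q : pred (int * int))
   (phi : int * int -> int * int) (w v : int * int -> C) :
  uniq s -> (forall p, P p -> p \in s) -> (forall q, Q q -> q \in s) ->
  injective phi -> (forall q, Q q -> P (phi q)) ->
  (forall p, P p -> exists q, Q q /\ p = phi q) ->
  (forall q, Q q -> w (phi q) = v q) ->
  \sum_(p <- s | P p) w p = \sum_(q <- s | Q q) v q.
Proof.
move=> Us HP HQ Iphi HQP HPQ Hw.
transitivity (\sum_(q <- s | Q q) w (phi q)); last by apply: eq_bigr => q Hq; rewrite Hw.
rewrite -big_filter -[RHS]big_filter -[X in _ = X](big_map phi xpredT w).
apply: perm_big; apply: uniq_perm.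
- exact: filter_uniq.
- by rewrite map_inj_uniq // filter_uniq.
move=> p; rewrite mem_filter; apply/idP/idP.
  move=> /andP [Hp _]; have [q [Hq ->]] := HPQ _ Hp.
  by apply: map_f; rewrite mem_filter Hq HQ.
move=> /mapP [q]; rewrite mem_filter => /andP [Hq _] ->.
by rewrite HQP // HP // HQP.
Qed.

Lemma cstD a b : cst (a + b) = cst a + cst b.
Proof. by rewrite /cst /tofracC polyCD tofracD. Qed.
Lemma cstM a b : cst (a * b) = cst a * cst b.
Proof. by rewrite /cst /tofracC polyCM tofracM. Qed.
Lemma cst1 : cst 1 = 1. Proof. by rewrite /cst /tofracC tofrac1. Qed.
Lemma cst0 : cst 0 = 0. Proof. by rewrite /cst /tofracC tofrac0. Qed.
Lemma cstX a n : cst (a ^+ n) = cst a ^+ n.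
Proof. by elim: n => [|n IH]; rewrite ?cst1 // !exprS cstM IH. Qed.

Lemma eps_eq : eps ^+ 2 + eps + 1 = 0.
Proof.
have hi : 'i ^+ 2 = -1 :> algC by exact: sqrCi.
have hs : sqrtC 3 ^+ 2 = 3 :> algC by rewrite sqrtCK.
have h2 : (2 : algC) != 0 by rewrite pnatr_eq0.
have -> : eps ^+ 2 + eps + 1 = ('i ^+ 2 * sqrtC 3 ^+ 2 + 3) / 4.
  by rewrite /eps; field.
by rewrite hi hs mulN1r addNr mul0r.
Qed.

Lemma epsC_eq : epsC ^+ 2 + epsC + 1 = 0.
Proof. by rewrite /epsC -cstX -cst1 -!cstD eps_eq cst0. Qed.

Lemma epsC3 : epsC ^+ 3 = 1.
Proof.
apply/eqP; rewrite -subr_eq0.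
have -> : epsC ^+ 3 - 1 = (epsC - 1) * (epsC ^+ 2 + epsC + 1) by ring.
by rewrite epsC_eq mulr0.
Qed.

Lemma epsC_neq0 : epsC != 0.
Proof.
apply/eqP => H; move: epsC_eq; rewrite H expr0n /= !add0r => /eqP.
by rewrite oner_eq0.
Qed.

Lemma eps_mod (z : int) : epsC ^ z = epsC ^ ((z %% 3)%Z).
Proof.
rewrite {1}(divz_eq z 3) expfzDr ?epsC_neq0 // [X in epsC ^ X * _]mulrC -exprz_exp.
have -> : epsC ^ 3%:Z = 1 by exact: epsC3.
by rewrite exp1rz mul1r.
Qed.

Definition Qv (p : int * int) : int := 2 * (p.1 * p.1 + p.1 * p.2 + p.2 * p.2).
Definition E00 (p : int * int) : int := 6 * (p.1 * p.1 - p.1 * p.2 + p.2 * p.2).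
Definition E10 (p : int * int) : int :=
  6 * (p.1 * p.1 - p.1 * p.2 + p.2 * p.2 + p.1 - p.2) + 2.
Definition cls (p : int * int) : int := ((p.1 - p.2) %% 3)%Z.
Definition Wy (p : int * int) : C := yvar ^ (p.1 + p.2).
Definition Tc (k : nat) (j : int) : C :=
  \sum_(p <- bx k | (Qv p == k%:Z) && (cls p == j)) Wy p.

Lemma absle (m : int) : `|m| <= m * m. Proof. case: (lerP 0 m) => H; nia. Qed.
Lemma sqge (m : int) : 0 <= m * m. Proof. by rewrite -expr2 sqr_ge0. Qed.

Lemma bx_Qv k p : Qv p = k%:Z -> p \in bx k.
Proof.
case: p => m n; rewrite /Qv /= => H; apply: mem_bx.
  by have := absle m; have := sqge (m + n); have := sqge n; lia.
by have := absle n; have := sqge (m + n); have := sqge m; lia.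
Qed.
Lemma bx_E00 k p : E00 p = k%:Z -> p \in bx k.
Proof.
case: p => m n; rewrite /E00 /= => H; apply: mem_bx.
  by have := absle m; have := sqge (m - n); have := sqge n; lia.
by have := absle n; have := sqge (m - n); have := sqge m; lia.
Qed.
Lemma bx_E10 k p : E10 p = k%:Z -> p \in bx k.
Proof.
case: p => m n; rewrite /E10 /= => H; apply: mem_bx.
  by have := absle m; have := sqge (m - n + 1); have := sqge n; lia.
by have := absle n; have := sqge (m - n + 1); have := sqge m; lia.
Qed.

Lemma T12 k : Tc k 1 = Tc k 2.
Proof.
apply: (@sum_reindex _ _ _ (fun q => (q.2, q.1))).
- exact: uniq_bx.
- by move=> p /andP [/eqP H _]; apply: bx_Qv.
- by move=> p /andP [/eqP H _]; apply: bx_Qv.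
- by move=> [a b] [c d] /= [-> ->].
- move=> [a b] /andP [/eqP H1 /eqP H2]; apply/andP; split; apply/eqP;
  move: H1 H2; rewrite /Qv /cls /=; lia.
- move=> [a b] /andP [/eqP H1 /eqP H2]; exists (b, a); split => //.
  apply/andP; split; apply/eqP; move: H1 H2; rewrite /Qv /cls /=; lia.
- by move=> [a b] _; rewrite /Wy /= addrC.
Qed.

Lemma Qv_phi0 (q : int * int) : Qv (2 * q.1 - q.2, 2 * q.2 - q.1) = E00 q.
Proof. by rewrite /Qv /E00 /=; ring. Qed.
Lemma Qv_phi2 (q : int * int) : Qv (2 * q.1 - q.2 + 1, 2 * q.2 - q.1 - 1) = E10 q.
Proof. by rewrite /Qv /E10 /=; ring. Qed.

Lemma T0E k : Tc k 0 = ThetaA2_00_x3 k.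
Proof.
rewrite /ThetaA2_00_x3 lattice_sumE.
apply: (@sum_reindex _ _ (fun q => E00 q == k%:Z) (fun q => (2 * q.1 - q.2, 2 * q.2 - q.1))
          _ Wy).
- exact: uniq_bx.
- by move=> p /andP [/eqP H _]; apply: bx_Qv.
- by move=> p /eqP H; apply: bx_E00.
- by move=> [a b] [c d] /= [H1 H2]; congr (_, _); lia.
- move=> [a b] /eqP H; apply/andP; split; apply/eqP; move: H; rewrite /Qv /E00 /cls /=.
    by move=> <-; ring.
  by move=> _; lia.
- move=> [m n] /andP [/eqP H1 /eqP H2].
  move: H2; rewrite /cls /= => H2.
  have Ht := divz_eq (m - n) 3; rewrite H2 addr0 in Ht.
  set t := ((m - n) %/ 3)%Z in Ht.
  exists (m - t, n + t); split; last by congr (_, _) => /=; lia.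
  apply/eqP; rewrite -H1 -Qv_phi0; congr Qv; congr (_, _) => /=; lia.
- by move=> [a b] _; rewrite /Wy /=; congr (_ ^ _); ring.
Qed.

Lemma T2E k : Tc k 2 = ThetaA2_10_x3 k.
Proof.
rewrite /ThetaA2_10_x3 lattice_sumE.
apply: (@sum_reindex _ _ (fun q => E10 q == k%:Z)
          (fun q => (2 * q.1 - q.2 + 1, 2 * q.2 - q.1 - 1)) _ Wy).
- exact: uniq_bx.
- by move=> p /andP [/eqP H _]; apply: bx_Qv.
- by move=> p /eqP H; apply: bx_E10.
- by move=> [a b] [c d] /= [H1 H2]; congr (_, _); lia.
- move=> [a b] /eqP H; apply/andP; split; apply/eqP.
    by rewrite Qv_phi2.
  by rewrite /cls /=; lia.
- move=> [m n] /andP [/eqP H1 /eqP H2].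
  move: H2; rewrite /cls /= => H2.
  have Ht := divz_eq (m - n) 3; rewrite H2 in Ht.
  set t := ((m - n) %/ 3)%Z in Ht; clearbody t.
  exists (m - 1 - t, n + 1 + t); split; last by congr (_, _) => /=; lia.
  apply/eqP; rewrite -H1 -Qv_phi2; congr Qv; congr (_, _) => /=; lia.
- by move=> [a b] _; rewrite /Wy /=; congr (_ ^ _); ring.
Qed.

Lemma split3 k (f : int * int -> C) :
  \sum_(p <- bx k | Qv p == k%:Z) f p =
  \sum_(p <- bx k | (Qv p == k%:Z) && (cls p == 0)) f p +
  \sum_(p <- bx k | (Qv p == k%:Z) && (cls p == 1)) f p +
  \sum_(p <- bx k | (Qv p == k%:Z) && (cls p == 2)) f p.
Proof.
transitivity (\sum_(p <- bx k) ((if (Qv p == k%:Z) && (cls p == 0) then f p else 0) +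
   (if (Qv p == k%:Z) && (cls p == 1) then f p else 0) +
   (if (Qv p == k%:Z) && (cls p == 2) then f p else 0))).
  rewrite big_mkcond; apply: eq_bigr => p _.
  case: (Qv p == k%:Z) => /=; last by rewrite !addr0.
  have : cls p = 0 \/ cls p = 1 \/ cls p = 2 by rewrite /cls; lia.
  by case=> [->|[->|->]] /=; rewrite ?addr0 ?add0r.
by rewrite !big_split /= -!big_mkcond.
Qed.

Lemma Th00E k : ThetaA2v_00 yvar k = Tc k 0 + Tc k 1 + Tc k 2.
Proof. by rewrite /ThetaA2v_00 lattice_sumE -/Qv (split3 k Wy). Qed.

Lemma Th01E k : ThetaA2v_01 yvar k = Tc k 0 + epsC * Tc k 1 + epsC ^+ 2 * Tc k 2.
Proof.
rewrite /ThetaA2v_01 lattice_sumE.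
rewrite (split3 k (fun p => epsC ^ (p.1 - p.2) * Wy p)).
rewrite /Tc !big_distrr /=; congr (_ + _ + _); apply: eq_bigr => p /andP [_ /eqP Hc];
  rewrite eps_mod -/(cls p) Hc //.
by rewrite mul1r.
Qed.

Lemma theta_coef (c : C) k : ThetaA2v_00 yvar k + c * ThetaA2v_01 yvar k =
  (1 + c) * Tc k 0 + (2 + c * (epsC + epsC ^+ 2)) * Tc k 1.
Proof. rewrite Th00E Th01E -T12; ring. Qed.

Lemma eps_sum : epsC + epsC ^+ 2 = -1.
Proof.
have := epsC_eq; move=> H; apply/eqP; rewrite -subr_eq0 opprK -H; apply/eqP; ring.
Qed.

Lemma epsl (l : nat) : (l <= 2)%N ->
  epsC ^ (l%:Z) + epsC ^ (- l%:Z) = if l == 0%N then 2 else -1.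
Proof.
case: l => [|[|[|]]] //= _.
- rewrite [epsC ^ (- _)]eps_mod.
  have -> : ((- (1%:Z)) %% 3)%Z = 2%:Z by lia.
  by rewrite -eps_sum.
- rewrite [epsC ^ (- _)]eps_mod.
  have -> : ((- (2%:Z)) %% 3)%Z = 1%:Z by lia.
  by rewrite -eps_sum addrC.
Qed.

Lemma theta_id (l : nat) : (l <= 2)%N ->
  (ThetaA2v_00 yvar : ser) + scst (epsC ^ (l%:Z) + epsC ^ (- l%:Z)) * (ThetaA2v_01 yvar : ser)
  = scst 3 * ((if l == 0%N then ThetaA2_00_x3 else ThetaA2_10_x3) : ser).
Proof.
move=> Hl; apply/funext => k; rewrite serD -!sscaleE /sscale theta_coef epsl //.
case: (l == 0%N).
  by rewrite -T0E eps_sum; ring.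
by rewrite -T2E -T12 eps_sum; ring.
Qed.

Lemma lattice_nz e w k : lattice_sum e w k != 0 -> exists m n, e m n = k%:Z.
Proof.
move=> H; case: (pselect (exists m n, e m n = k%:Z)) => // Hn; exfalso.
move/eqP: H; apply; rewrite /lattice_sum big1 // => i _; rewrite big1 // => j _.
case: ifP => // /eqP Heq; exfalso; apply: Hn; eauto.
Qed.

Lemma grd00 : grd 0 (ThetaA2_00_x3 : ser).
Proof. by move=> k /lattice_nz [m [n H]]; lia. Qed.
Lemma grd10 : grd 2 (ThetaA2_10_x3 : ser).
Proof. by move=> k /lattice_nz [m [n H]]; lia. Qed.

Lemma Tv00_0 yv : ThetaA2v_00 yv 0%N = 1.
Proof.
rewrite /ThetaA2v_00 lattice_sumE -big_filter.
have -> : [seq p <- bx 0 | 2 * (p.1 * p.1 + p.1 * p.2 + p.2 * p.2) == 0%:Z] = [:: (0, 0)].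
  by vm_compute.
by rewrite big_seq1 /= expr0z.
Qed.

Lemma Tv01_0 yv : ThetaA2v_01 yv 0%N = 1.
Proof.
rewrite /ThetaA2v_01 lattice_sumE -big_filter.
have -> : [seq p <- bx 0 | 2 * (p.1 * p.1 + p.1 * p.2 + p.2 * p.2) == 0%:Z] = [:: (0, 0)].
  by vm_compute.
by rewrite big_seq1 /= !expr0z mul1r.
Qed.

Set Implicit Arguments. Unset Strict Implicit.

Definition Tm (V : zmodType) (dot : V -> V -> int) (K : V) (SW : V -> int) (c : V)
  (zp zm : ser) (a b : V) : ser :=
  scst ((SW a * SW b)%:~R * epsC ^ dot (a - b) c) * zp ^ dot a b * zm ^ dot (K - a) (K - b).

Definition Ssum (V : zmodType) (dot : V -> V -> int) (K : V) (SW : V -> int) (B : seq V)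
  (c : V) (zp zm : ser) : ser :=
  \sum_(a <- B) \sum_(b <- B) Tm dot K SW c zp zm a b.

Lemma psiE (V : zmodType) (dot : V -> V -> int) chi K SW B c (zp zm : ser) :
  zp 0%N != 0 -> zm 0%N != 0 ->
  (psi dot chi K SW B (fun a b => a - b) c zp zm : ser) =
  scst 9%:R * ((spowz Gser chi : ser) * ((spowz Hser (- dot K K) : ser) *
     Ssum dot K SW B c zp zm)).
Proof.
move=> Hp Hm.
have HS : (fun n => \sum_(a <- B) \sum_(b <- B)
        smul (sscale (((SW a * SW b)%:~R : C) * epsC ^ (dot (a - b) c))
                     (spowz zp (dot a b)))
             (spowz zm (dot (K - a) (K - b))) n) = Ssum dot K SW B c zp zm.
  apply/funext => n; rewrite /Ssum ser_sum; apply: eq_bigr => a _.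
  rewrite ser_sum; apply: eq_bigr => b _.
  by rewrite /Tm -serM -sscaleE !spowzE.
by rewrite /psi HS -sscaleE.
Qed.

Lemma pair_mulrn (V : zmodType) (x : V * int) l : (x *+ l) = (x.1 *+ l, x.2 *+ l).
Proof.
case: x => a s; elim: l => [|l IH] //=.
by rewrite !mulrS IH.
Qed.


Lemma rearr (R : comNzRingType) (w e x y u v : R) :
  w * e * (x * y) * (u * v) = w * x * u * e * y * v.
Proof. ring. Qed.

Lemma termE (V : zmodType) (dot : V -> V -> int) K SW c1 (l : nat) (zp zm : ser) a b (s t : int) :
  zp \is a GRing.unit -> zm \is a GRing.unit ->
  bl_SW SW (a, s) = SW a -> bl_SW SW (b, t) = SW b ->
  Tm (bl_dot dot) (K, 1) (bl_SW SW) (c1, - l%:Z) zp zm (a, s) (b, t) =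
  Tm dot K SW c1 zp zm a b * scst (epsC ^ ((s - t) * l%:Z)) * zp ^ (- (s * t))
     * zm ^ (- ((1 - s) * (1 - t))).
Proof.
move=> Hp Hm Ha Hb; rewrite /Tm /bl_dot. rewrite /= Ha Hb.
have -> : dot (a - b) c1 - (s - t) * - l%:Z = dot (a - b) c1 + (s - t) * l%:Z by ring.
rewrite expfzDr; last exact: epsC_neq0. rewrite mulrA. rewrite sconstM. rewrite (exprzDr Hp). rewrite (exprzDr Hm).
exact: (@rearr ser _ _ _ _ _ _).
Qed.

Lemma int1mulrn (l : nat) : (1 *+ l : int) = l%:Z.
Proof. by elim: l => // l IH; rewrite mulrS IH -addn1 PoszD addrC. Qed.

Lemma blow_sum (V : zmodType) (dot : V -> V -> int) K SW (B : seq V) c1 (l : nat) (zp zm : ser) :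
  zp \is a GRing.unit -> zm \is a GRing.unit ->
  Ssum (bl_dot dot) (bl_pull K + bl_E V) (bl_SW SW) (bl_B B) (bl_pull c1 - bl_E V *+ l) zp zm
  = Ssum dot K SW B c1 zp zm *
    (zm^-1 + scst (epsC ^ (- l%:Z)) + scst (epsC ^ (l%:Z)) + zp^-1).
Proof.
move=> Hp Hm.
have EK : bl_pull K + bl_E V = (K, 1) by rewrite /bl_pull /bl_E; congr pair; rewrite ?addr0 ?add0r.
have Ec : bl_pull c1 - bl_E V *+ l = (c1, - l%:Z).
  by rewrite pair_mulrn /bl_pull /bl_E /=; congr pair; rewrite ?mul0rn ?subr0 ?sub0r ?int1mulrn.
have EB : bl_B B = [seq (a, 0) | a <- B] ++ [seq (a, 1) | a <- B].
  rewrite /bl_B; congr (_ ++ _); apply: eq_map => a //.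
  by rewrite /bl_pull /bl_E; congr pair; rewrite ?addr0 ?add0r.
have S0 : forall a, bl_SW SW (a, 0) = SW a by move=> a; rewrite /bl_SW /= ?eqxx.
have S1 : forall a, bl_SW SW (a, 1) = SW a by move=> a; rewrite /bl_SW /= ?eqxx ?orbT.
rewrite /Ssum EK Ec EB big_cat /= !big_map.
rewrite big_distrl /= -big_split /=; apply: eq_bigr => a _.
rewrite !big_cat /= !big_map -!big_split big_distrl /=; apply: eq_bigr => b _.
rewrite !termE //.
rewrite !(subrr, subr0, sub0r, mul0r, mulr0, mul1r, mulr1, mulN1r, oppr0, expr0z).
by rewrite !exprN1 !mulrDr !addrA.
Qed.

Lemma natC_neq0 n : (n.+1%:R : C) != 0.
Proof.
rewrite /C -(rmorph_nat (@FracField.tofrac _)) tofrac_eq0 -polyC_natr polyC_eq0.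
by rewrite pnatr_eq0.
Qed.

Lemma Zser_E yv : (Zser yv : ser) = (ThetaA2v_00 yv : ser) * (ThetaA2v_01 yv : ser)^-1.
Proof. by rewrite /Zser -sinvE // Tv01_0 oner_eq0. Qed.

Lemma Zser0 yv : (Zser yv : ser) 0%N = 1.
Proof.
rewrite Zser_E serM0 serV0; last by rewrite (Tv01_0 yv) oner_eq0.
by rewrite (Tv01_0 yv) (Tv00_0 yv) invr1 mulr1.
Qed.

Lemma Tv01_unit yv : (ThetaA2v_01 yv : ser) \is a GRing.unit.
Proof. rewrite unit_serE (Tv01_0 yv). exact: oner_neq0. Qed.

Lemma ZtrE : (Ztr : ser) = (Zser yvar : ser) * ((Zser yvar : ser) + scst 3%:R * (Zser 1 : ser)).
Proof. by rewrite mulrDr [_ * (scst _ * _)]mulrCA -sscaleE. Qed.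
Lemma ZnmE : (Znm : ser) = (Zser yvar : ser) + scst 3%:R * (Zser 1 : ser).
Proof. by rewrite -sscaleE. Qed.

Lemma Znm0 : (Znm : ser) 0%N = 4%:R.
Proof.
rewrite ZnmE serD serM0 !Zser0 sconst0 mulr1.
by rewrite -(natrD C 1 3).
Qed.

Lemma invsum (R : comUnitRingType) (zp zm : R) : zp \is a GRing.unit -> zm \is a GRing.unit ->
  zp^-1 + zm^-1 = (zp + zm) * (zp * zm)^-1.
Proof.
move=> Hp Hm; rewrite invrM // mulrDl [zp * _]mulrCA mulrV // mulr1.
by rewrite mulrA mulrV // mul1r addrC.
Qed.

Lemma Zpm_facts (zp zm : ser) : are_Zpm zp zm ->
  [/\ zp \is a GRing.unit, zm \is a GRing.unit & zp^-1 + zm^-1 = (Zser yvar : ser)].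
Proof.
move=> [HS HP].
have ES : zp + zm = (Ztr : ser) by apply/funext => n; rewrite serD; exact: HS.
have EP : zp * zm = (Znm : ser) by apply/funext => n; rewrite serM; exact: HP.
have H4 : zp 0%N * zm 0%N != 0.
  by rewrite -serM0 EP Znm0 natC_neq0.
have Hp : zp \is a GRing.unit by rewrite unit_serE; apply: contraNneq H4 => ->; rewrite mul0r.
have Hm : zm \is a GRing.unit by rewrite unit_serE; apply: contraNneq H4 => ->; rewrite mulr0.
split => //.
have HN : (Znm : ser) \is a GRing.unit by rewrite unit_serE Znm0 natC_neq0.
rewrite (@invsum ser zp zm Hp Hm). rewrite ES. rewrite EP. rewrite ZtrE. rewrite -ZnmE.
rewrite -mulrA mulrV // mulr1 //.
Qed.

Lemma eta0 : etabar_x6 0%N = 1. Proof. by []. Qed.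

Lemma E3_0 : ((etabar_x6 : ser) ^+ 3) 0%N = 1.
Proof. by rewrite serX0 eta0 expr1n. Qed.

Lemma E3_unit : (etabar_x6 : ser) ^+ 3 \is a GRing.unit.
Proof. by rewrite unit_serE E3_0 oner_neq0. Qed.

Lemma D3_unit : scst 3%:R \is a GRing.unit.
Proof. by rewrite unit_serE sconst0 natC_neq0. Qed.

Lemma Hser_E : (Hser : ser) = (ThetaA2v_01 yvar : ser) * (scst 3%:R * (etabar_x6 : ser) ^+ 3)^-1.
Proof.
rewrite /Hser -sinvE; last by rewrite serM0 sconst0 E3_0 mulr1 natC_neq0.
by rewrite sscaleE spowE.
Qed.

Lemma Hser0 : (Hser : ser) 0%N != 0.
Proof.
rewrite Hser_E serM0 serV0 ?serM0 ?sconst0 ?E3_0 ?(Tv01_0 yvar) ?mulr1 ?mul1r.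
  by rewrite invr_eq0 natC_neq0.
by rewrite natC_neq0.
Qed.

Lemma alg1 (R : comUnitRingType) (T0 T1 s D E X : R) :
  T1 \is a GRing.unit -> D \is a GRing.unit -> E \is a GRing.unit ->
  T0 + s * T1 = D * X -> T1 * (D * E)^-1 * (T0 * T1^-1 + s) = X * E^-1.
Proof.
move=> H1 HD HE H; rewrite invrM //.
have -> : T1 * (E^-1 * D^-1) * (T0 * T1^-1 + s) = E^-1 * D^-1 * (T0 * (T1 * T1^-1) + s * T1)
  by ring.
rewrite mulrV // mulr1 H mulrA -[E^-1 * D^-1 * D]mulrA mulVr // mulr1 mulrC.
by [].
Qed.

Definition Xl (l : nat) : ser := if l == 0%N then ThetaA2_00_x3 else ThetaA2_10_x3.

Lemma HW (l : nat) : (l <= 2)%N ->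
  (Hser : ser) * ((Zser yvar : ser) + scst (epsC ^ (l%:Z) + epsC ^ (- l%:Z)))
  = Xl l * ((etabar_x6 : ser) ^+ 3)^-1.
Proof.
move=> Hl; rewrite Hser_E Zser_E; apply: alg1.
- exact: Tv01_unit.
- exact: D3_unit.
- exact: E3_unit.
by rewrite (@theta_id l Hl).
Qed.

Lemma alg2 (R : comNzRingType) (a g h1 h s w : R) :
  a * (g * (h1 * h * (s * w))) = (h * w) * (a * (g * (h1 * s))).
Proof. ring. Qed.

Lemma alg3 (R : comNzRingType) (p m x y Z : R) : p + m = Z ->
  m + x + y + p = Z + (y + x).
Proof. move=> <-; ring. Qed.

Lemma grd_shift r r' (f : ser) : grd r f -> ((r - r') %% 3 = 0)%Z -> grd r' f.
Proof. by move=> H Hr n /H; lia. Qed.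

Lemma grdF (l : nat) : (l <= 2)%N -> grd (2 * l%:Z * l%:Z) (Xl l * ((etabar_x6 : ser) ^+ 3)^-1).
Proof.
move=> Hl.
have HE : grd 0 (((etabar_x6 : ser) ^+ 3)^-1).
  apply: grdV; first by rewrite E3_0 oner_neq0.
  apply: grdX; apply: grd_prod => k; apply: grd_sbinom.
  lia.
have H0 := @grdM 0 0 _ _ grd00 HE; rewrite addr0 in H0.
have H2 := @grdM 2 0 _ _ grd10 HE; rewrite addr0 in H2.
case: l Hl => [|[|[|l]]] Hl.
- rewrite mulr0 /Xl /=. exact: H0.
- rewrite !mulr1 /Xl /=. exact: H2.
- apply: (@grd_shift 2); last by lia.
  rewrite /Xl /=. exact: H2.
- exfalso; lia.
Qed.

Unset Implicit Arguments. Set Strict Implicit.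

Theorem mainTheorem7
  (V : zmodType) (dot : V -> V -> int)      (* H^2(S,Z) with intersection form *)
  (K : V) (chi : int) (pg : nat)            (* K_S, chi(O_S), p_g(S) *)
  (SW : V -> int) (B : seq V)               (* SW invariants, B contains supp SW *)
  (c1 : V) (l : nat) (zp zm : series) :
  is_pairing dot ->
  (forall a, ((dot a a - dot K a) %% 2 = 0)%Z) ->   (* K characteristic *)
  (0 < pg)%N -> chi = 1 + pg%:Z ->                    (* b_1 = 0, p_g > 0 *)
  uniq B -> (forall a, SW a != 0 -> a \in B) ->
  (l <= 2)%N ->
  are_Zpm zp zm ->
  forall n : nat,
    Zinst (bl_dot dot) chi (bl_pull K + bl_E V) (bl_SW SW) (bl_B B)
          (bl_pull c1 - bl_E V *+ l) zp zm n
    = smul (smul (if l == 0%N then ThetaA2_00_x3 else ThetaA2_10_x3)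
                 (sinv (spow etabar_x6 3)))
           (Zinst dot chi K SW B c1 zp zm) n.
Proof.
move=> _ _ _ _ _ _ Hl Hz n.
have [Hp Hm Hinv] := @Zpm_facts zp zm Hz.
have Hp0 : (zp : ser) 0%N != 0 by exact: Hp.
have Hm0 : (zm : ser) 0%N != 0 by exact: Hm.
have EK : bl_pull K + bl_E V = (K, 1) by rewrite /bl_pull /bl_E; congr pair; rewrite ?addr0 ?add0r.
have Ec : bl_pull c1 - bl_E V *+ l = (c1, - l%:Z).
  by rewrite pair_mulrn /bl_pull /bl_E /=; congr pair; rewrite ?mul0rn ?subr0 ?sub0r ?int1mulrn.
set F := Xl l * ((etabar_x6 : ser) ^+ 3)^-1.
set P := (psi dot chi K SW B (fun a b => a - b) c1 zp zm : ser).
have Epsi : (psi (bl_dot dot) chi (bl_pull K + bl_E V) (bl_SW SW) (bl_B B)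
       (fun a b => a - b) (bl_pull c1 - bl_E V *+ l) zp zm : ser) = F * P.
  rewrite (@psiE _ (bl_dot dot) chi _ (bl_SW SW) (bl_B B) _ (zp : ser) (zm : ser) Hp0 Hm0).
  rewrite /P (@psiE _ dot chi K SW B c1 (zp : ser) (zm : ser) Hp0 Hm0).
  rewrite (@blow_sum V dot K SW B c1 l zp zm Hp Hm).
  have EKK : bl_dot dot (bl_pull K + bl_E V) (bl_pull K + bl_E V) = dot K K - 1.
    by rewrite EK /bl_dot /= mulr1.
  rewrite EKK.
  rewrite (@spowzE (Hser : ser) _ Hser0) (@spowzE (Hser : ser) _ Hser0).
  have -> : - (dot K K - 1) = - dot K K + 1 by rewrite opprB addrC.
  rewrite (@exprzDr ser (Hser : ser) _ (- dot K K) 1) ?unit_serE ?Hser0 // expr1z.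
  rewrite (@alg2 ser).
  rewrite (@alg3 ser _ _ _ _ _ Hinv) -sconstD.
  by rewrite /F -(@HW l Hl).
rewrite /Zinst.
have Er : - 2 * bl_dot dot (bl_pull c1 - bl_E V *+ l) (bl_pull c1 - bl_E V *+ l) - 8 * chi
          = (- 2 * dot c1 c1 - 8 * chi) + 2 * l%:Z * l%:Z.
  by rewrite Ec /bl_dot /=; ring.
rewrite Er Epsi (@proj_grd _ _ F P (@grdF l Hl)).
rewrite serM; congr (smul _ _ n).
rewrite /F /Xl spowE -sinvE; last by rewrite E3_0 oner_neq0.
by case: (l == 0%N).
Qed.
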